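(* The set Ghost World $\mathrm{GW}$ of bipartite correlations is closed under wirings: for any finite collection of boxes $P_1,\dots,P_n\in\mathrm{GW}$ and any pair of wirings $\mathcal{W}_A,\mathcal{W}_B$, the wired box $\mathcal{W}_A\otimes\mathcal{W}_B(\otimes_{i=1}^nP_i)$ belongs to $\mathrm{GW}$.
   Context: A bipartite box is a conditional distribution $P(a,b|x,y)$ with finite input alphabets $\mathcal{X},\mathcal{Y}$ and finite output alphabets $\mathcal{A},\mathcal{B}$; tripartite boxes $P(a_1,a_2,a_3|x_1,x_2,x_3)$ are defined analogously. A multipartite box is no-signalling if, for every party, summing over that party's output gives a result independent of that party's input. Ghost World: a bipartite box $P(a,b|x,y)$ belongs to $\mathrm{GW}$ iff there exist no-signalling tripartite boxes $P_A(a,a',b|x,x',y)$ (with $a,a'\in\mathcal{A}$, $x,x'\in\mathcal{X}$) and $P_B(a,b,b'|x,y,y')$ (with $b,b'\in\mathcal{B}$, $y,y'\in\mathcal{Y}$) such that (1) $P_A$ is invariant under exchanging its first two parties, i.e. $P_A(a,a',b|x,x',y)=P_A(a',a,b|x',x,y)$, and $P_B$ is invariant under exchanging its last two parties, i.e. $P_B(a,b,b'|x,y,y')=P_B(a,b',b|x,y',y)$; (2) $P(a,b|x,y)=\sum_{a'}P_A(a,a',b|x,x',y)=\sum_{b'}P_B(a,b,b'|x,y,y')$ for all $x',y'$. ($\mathrm{GW}$ is considered in every bipartite Bell scenario.) Wirings: given $n$ bipartite boxes $P_1,\dots,P_n$ (each in some bipartite Bell scenario), with Alice holding the first side of each and Bob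 the second, and a target scenario $(\mathcal{X}',\mathcal{Y}',\mathcal{A}',\mathcal{B}')$, a (deterministic) wiring $\mathcal{W}_A$ for Alice is a procedure that, on effective input $x'\in\mathcal{X}'$, sequentially chooses a not-yet-used box $i$ and an input for Alice's side of that box and receives the output, where each choice is a function of $x'$ and all previous boxes, inputs and outputs; finally it outputs $a'\in\mathcal{A}'$ as a function of $x'$ and the full history. Bob's wiring $\mathcal{W}_B$ is analogous. Using the boxes independently this defines the box $\mathcal{W}_A\otimes\mathcal{W}_B(\otimes_{i=1}^nP_i)(a',b'|x',y')$. *)

(* Defs.v *)
From HB Require Import structures.
From mathcomp Require Import all_boot all_order all_algebra.
Set Implicit Arguments. Unset Strict Implicit. Unset Printing Implicit Defensive.
Import Order.TTheory GRing.Theory Num.Theory.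
Local Open Scope ring_scope.

Section Boxes.
Variable R : realFieldType.

(* A bipartite box P(a,b|x,y) is written  P a b x y. *)
Definition box2 (A B X Y : finType) (P : A -> B -> X -> Y -> R) : Prop :=
  (forall a b x y, 0 <= P a b x y) /\
  (forall x y, \sum_(a : A) \sum_(b : B) P a b x y = 1).

Definition box3 (A1 A2 A3 X1 X2 X3 : finType)
  (P : A1 -> A2 -> A3 -> X1 -> X2 -> X3 -> R) : Prop :=
  (forall a1 a2 a3 x1 x2 x3, 0 <= P a1 a2 a3 x1 x2 x3) /\
  (forall x1 x2 x3,
     \sum_(a1 : A1) \sum_(a2 : A2) \sum_(a3 : A3) P a1 a2 a3 x1 x2 x3 = 1).

Definition nosig3 (A1 A2 A3 X1 X2 X3 : finType)
  (P : A1 -> A2 -> A3 -> X1 -> X2 -> X3 -> R) : Prop :=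
  (forall a2 a3 x1 x1' x2 x3,
     \sum_(a1 : A1) P a1 a2 a3 x1 x2 x3 = \sum_(a1 : A1) P a1 a2 a3 x1' x2 x3) /\
  (forall a1 a3 x1 x2 x2' x3,
     \sum_(a2 : A2) P a1 a2 a3 x1 x2 x3 = \sum_(a2 : A2) P a1 a2 a3 x1 x2' x3) /\
  (forall a1 a2 x1 x2 x3 x3',
     \sum_(a3 : A3) P a1 a2 a3 x1 x2 x3 = \sum_(a3 : A3) P a1 a2 a3 x1 x2 x3').

Definition GW (A B X Y : finType) (P : A -> B -> X -> Y -> R) : Prop :=
  exists (PA : A -> A -> B -> X -> X -> Y -> R)
         (PB : A -> B -> B -> X -> Y -> Y -> R),
    [/\ box3 PA /\ nosig3 PA,
        box3 PB /\ nosig3 PB,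
        (forall a a' b x x' y, PA a a' b x x' y = PA a' a b x' x y),
        (forall a b b' x y y', PB a b b' x y y' = PB a b' b x y' y) &
        (forall a b x y x' y',
           P a b x y = \sum_(a' : A) PA a a' b x x' y /\
           P a b x y = \sum_(b' : B) PB a b b' x y y')].
End Boxes.

(* A bipartite Bell scenario with finite (nonempty) input alphabets; the
   distinguished inputs sx0 / sy0 are only used to feed boxes that a party
   never queries (irrelevant for no-signalling boxes). *)
Record scen := Scen {
  sX : finType; sY : finType; sA : finType; sB : finType;
  sx0 : sX; sy0 : sY }.

(* Deterministic adaptive wiring for one party over n boxes, where box i has
   input alphabet I i and output alphabet O i: a decision tree that either
   stops with an effective output, or queries box i with an input and continues
   depending on the obtained output. *)
Inductive wtree (n : nat) (I O : 'I_n -> finType) (Out : Type) : Type :=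
| WLeaf of Out
| WNode (i : 'I_n) of I i & (O i -> wtree I O Out).
Arguments WLeaf {n I O Out} _.
Arguments WNode {n I O Out} i _ _.

Fixpoint wvalid n (I O : 'I_n -> finType) Out (used : seq 'I_n)
  (t : wtree I O Out) : Prop :=
  match t with
  | WLeaf _ => True
  | WNode i _ k => i \notin used /\ forall o, wvalid (i :: used) (k o)
  end.

Fixpoint wout n (I O : 'I_n -> finType) Out (t : wtree I O Out)
  (r : forall i, O i) : Out :=
  match t with
  | WLeaf o => o
  | WNode i _ k => wout (k (r i)) r
  end.

Fixpoint winputs n (I O : 'I_n -> finType) Out (t : wtree I O Out)
  (r : forall i, O i) (d : forall i, I i) : forall i, I i :=
  match t with
  | WLeaf _ => d
  | WNode i x k => @dfwith _ I (winputs (k (r i)) r d) i x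
  end.

Definition wiringA n (S : 'I_n -> scen) (X' A' : finType) :=
  X' -> wtree (fun i => sX (S i)) (fun i => sA (S i)) A'.
Definition wiringB n (S : 'I_n -> scen) (Y' B' : finType) :=
  Y' -> wtree (fun i => sY (S i)) (fun i => sB (S i)) B'.

(* The wired box W_A (x) W_B (P_1 (x) ... (x) P_n), boxes used independently:
   sum over all outputs of all boxes of the product of the box probabilities
   at the inputs actually fed by the two wirings. *)
Definition wired (R : realFieldType) n (S : 'I_n -> scen)
  (P : forall i, sA (S i) -> sB (S i) -> sX (S i) -> sY (S i) -> R)
  (X' Y' A' B' : finType) (WA : wiringA S X' A') (WB : wiringB S Y' B')
  (a' : A') (b' : B') (x' : X') (y' : Y') : R :=
  \sum_(rA : {dffun forall i : 'I_n, sA (S i)})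
  \sum_(rB : {dffun forall i : 'I_n, sB (S i)})
    if (wout (WA x') rA == a') && (wout (WB y') rB == b') then
      \prod_(i < n) P i (rA i) (rB i)
          (winputs (WA x') rA (fun j => sx0 (S j)) i)
          (winputs (WB y') rB (fun j => sy0 (S j)) i)
    else 0.

(* Main.v *)
Require Import Defs.
From HB Require Import structures.
From mathcomp Require Import all_boot all_order all_algebra.
Set Implicit Arguments. Unset Strict Implicit. Unset Printing Implicit Defensive.
Import Order.TTheory GRing.Theory Num.Theory.
Local Open Scope ring_scope.

Lemma dffun_distr (R : realFieldType) (I : finType) (O : I -> finType)
  (G : forall i, O i -> R) :
  \sum_(r : {dffun forall i, O i}) \prod_i G i (r i) = \prod_i \sum_(o : O i) G i o.
Proof.
rewrite (reindex (@dffun_of_fprod I O)); last exact/onW_bij/dffun_of_fprod_bij.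
under eq_bigr => t _ do under eq_bigr => i _ do rewrite ffunE.
pose P_ := fun i => [ffun o => G i o].
transitivity (\sum_(t : fprod O) \prod_(i in I) P_ i (t i)).
  by apply: eq_bigr => t _; apply: eq_bigr => i _; rewrite ffunE.
rewrite big_fprod.
transitivity (\prod_i \sum_(j in tagged_with O i) untag 0 (P_ i) j); last first.
  apply: eq_bigr => i _; rewrite -(big_tag (fun i o => P_ i o)). by apply: eq_bigr => o _; rewrite ffunE.
by rewrite bigA_distr_big_dep.
Qed.

Lemma sum_ind (R : realFieldType) (T : finType) (v : T) (X : R) :
  \sum_(a : T) (v == a)%:R * X = X.
Proof.
rewrite (bigD1 v) //= eqxx mul1r big1 ?addr0 // => a /negbTE.
by rewrite eq_sym => ->; rewrite mul0r.
Qed.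

Lemma key (R : realFieldType) n (I O : 'I_n -> finType) Out
  (t : wtree I O Out) (d : forall i, I i) (F : forall i, O i -> I i -> R) :
  (forall i x x', \sum_o F i o x = \sum_o F i o x') ->
  \sum_(r : {dffun forall i, O i}) \prod_i F i (r i) (winputs t r d i)
   = \prod_i \sum_o F i o (d i).
Proof.
elim: t F => [o|i x k IH] F hF /=.
  exact: (dffun_distr (fun i o => F i o (d i))).
pose G (o : O i) : forall j, O j -> I j -> R := fun j o' y =>
  if j == i then (if Tagged O o' == Tagged O o then F i o x else 0)
  else F j o' y.
have hG o j y y' : \sum_o' G o j o' y = \sum_o' G o j o' y'.
  rewrite /G; case: (j == i) => //; exact: hF.
transitivity (\sum_(o : O i) \sum_(r : {dffun forall i, O i})
    \prod_j G o j (r j) (winputs (k o) r d j)).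
  rewrite [RHS]exchange_big /=; apply: eq_bigr => r _.
  rewrite [RHS](bigD1 (r i)) //= [X in _ = _ + X]big1 ?addr0; last first.
    move=> o ne; rewrite (bigD1 i) //= /G eqxx eq_Tagged /= eq_sym (negbTE ne).
    by rewrite mul0r ?mul0r.
  apply: eq_bigr => j _; rewrite /G; case: eqP => [ji|/eqP nji].
    subst j; rewrite eqxx dfwith_in; done.
  by rewrite dfwith_out // eq_sym.
rewrite [LHS](eq_bigr _ (fun o _ => IH o _ (hG o))).
transitivity (\sum_(o : O i) F i o x * \prod_(j | j != i) \sum_o' F j o' (d j)).
  apply: eq_bigr => o _; rewrite (bigD1 i) //=; congr (_ * _).
    rewrite /G eqxx (bigD1 o) //= eqxx big1 ?addr0 // => o' ne.
    by rewrite eq_Tagged /= (negbTE ne).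
  by apply: eq_bigr => j /negbTE ji; rewrite /G ji.
by rewrite -big_distrl /= (hF i x (d i)) [RHS](bigD1 i).
Qed.

Lemma sum_ind3_1 (R : realFieldType) (T1 T2 T3 U : finType) (f1 : T1 -> U)
  (c2 : T2 -> R) (c3 : T3 -> R) (g : T1 -> T2 -> T3 -> R) :
  \sum_(u : U) \sum_t1 \sum_t2 \sum_t3 ((f1 t1 == u)%:R * (c2 t2 * (c3 t3 * g t1 t2 t3)))
  = \sum_t2 \sum_t3 (c2 t2 * (c3 t3 * \sum_t1 g t1 t2 t3)).
Proof.
rewrite exchange_big /=.
transitivity (\sum_t1 \sum_t2 \sum_t3 (c2 t2 * (c3 t3 * g t1 t2 t3))).
  apply: eq_bigr => t1 _.
  under eq_bigr => u _ do (under eq_bigr => t2 _ do rewrite -big_distrr; rewrite -big_distrr /=).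
  by rewrite sum_ind.
rewrite exchange_big; apply: eq_bigr => t2 _ /=.
rewrite exchange_big; apply: eq_bigr => t3 _ /=.
by rewrite !big_distrr.
Qed.

Lemma sum_ind3_2 (R : realFieldType) (T1 T2 T3 U : finType) (f2 : T2 -> U)
  (c1 : T1 -> R) (c3 : T3 -> R) (g : T1 -> T2 -> T3 -> R) :
  \sum_(u : U) \sum_t1 \sum_t2 \sum_t3 (c1 t1 * ((f2 t2 == u)%:R * (c3 t3 * g t1 t2 t3)))
  = \sum_t1 \sum_t3 (c1 t1 * (c3 t3 * \sum_t2 g t1 t2 t3)).
Proof.
rewrite exchange_big /=; apply: eq_bigr => t1 _.
rewrite exchange_big /=.
transitivity (\sum_t2 \sum_t3 (c1 t1 * (c3 t3 * g t1 t2 t3))).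
  apply: eq_bigr => t2 _.
  under eq_bigr => u _ do (under eq_bigr => t3 _ do rewrite mulrCA; rewrite -big_distrr /=).
  by rewrite sum_ind.
rewrite exchange_big; apply: eq_bigr => t3 _ /=.
by rewrite !big_distrr.
Qed.

Lemma sum_ind3_3 (R : realFieldType) (T1 T2 T3 U : finType) (f3 : T3 -> U)
  (c1 : T1 -> R) (c2 : T2 -> R) (g : T1 -> T2 -> T3 -> R) :
  \sum_(u : U) \sum_t1 \sum_t2 \sum_t3 (c1 t1 * (c2 t2 * ((f3 t3 == u)%:R * g t1 t2 t3)))
  = \sum_t1 \sum_t2 (c1 t1 * (c2 t2 * \sum_t3 g t1 t2 t3)).
Proof.
rewrite exchange_big /=; apply: eq_bigr => t1 _.
rewrite exchange_big /=; apply: eq_bigr => t2 _.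
rewrite exchange_big /= !big_distrr /=; apply: eq_bigr => t3 _.
by rewrite -!big_distrr /= sum_ind.
Qed.

Definition W3 (R : realFieldType) n (I1 O1 I2 O2 I3 O3 : 'I_n -> finType)
  (X1 X2 X3 Z1 Z2 Z3 : finType)
  (T1 : X1 -> wtree I1 O1 Z1) (T2 : X2 -> wtree I2 O2 Z2) (T3 : X3 -> wtree I3 O3 Z3)
  (d1 : forall i, I1 i) (d2 : forall i, I2 i) (d3 : forall i, I3 i)
  (Q : forall i, O1 i -> O2 i -> O3 i -> I1 i -> I2 i -> I3 i -> R)
  (a1 : Z1) (a2 : Z2) (a3 : Z3) (x1 : X1) (x2 : X2) (x3 : X3) : R :=
  \sum_(r1 : {dffun forall i, O1 i}) \sum_(r2 : {dffun forall i, O2 i})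
  \sum_(r3 : {dffun forall i, O3 i})
   ((wout (T1 x1) r1 == a1)%:R * ((wout (T2 x2) r2 == a2)%:R *
    ((wout (T3 x3) r3 == a3)%:R *
     \prod_i Q i (r1 i) (r2 i) (r3 i) (winputs (T1 x1) r1 d1 i)
          (winputs (T2 x2) r2 d2 i) (winputs (T3 x3) r3 d3 i)))).


Lemma W3_M1 (R : realFieldType) n (I1 O1 I2 O2 I3 O3 : 'I_n -> finType)
  (X1 X2 X3 Z1 Z2 Z3 : finType)
  (T1 : X1 -> wtree I1 O1 Z1) (T2 : X2 -> wtree I2 O2 Z2) (T3 : X3 -> wtree I3 O3 Z3)
  d1 d2 d3 (Q : forall i, O1 i -> O2 i -> O3 i -> I1 i -> I2 i -> I3 i -> R)
  (hQ : forall i b c y y' z w, \sum_o Q i o b c y z w = \sum_o Q i o b c y' z w)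
  a2 a3 x1 x2 x3 :
  \sum_a1 W3 T1 T2 T3 d1 d2 d3 Q a1 a2 a3 x1 x2 x3 =
  \sum_(r2 : {dffun forall i, O2 i}) \sum_(r3 : {dffun forall i, O3 i})
   ((wout (T2 x2) r2 == a2)%:R * ((wout (T3 x3) r3 == a3)%:R *
     \prod_i \sum_o Q i o (r2 i) (r3 i) (d1 i)
          (winputs (T2 x2) r2 d2 i) (winputs (T3 x3) r3 d3 i))).
Proof.
rewrite /W3 (sum_ind3_1 (fun r1 : {dffun forall i, O1 i} => wout (T1 x1) r1)
  (fun r2 : {dffun forall i, O2 i} => (wout (T2 x2) r2 == a2)%:R) (fun r3 : {dffun forall i, O3 i} => (wout (T3 x3) r3 == a3)%:R)).
apply: eq_bigr => r2 _; apply: eq_bigr => r3 _.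
rewrite (key (T1 x1) d1 (F := fun i o y => Q i o (r2 i) (r3 i) y (winputs (T2 x2) r2 d2 i) (winputs (T3 x3) r3 d3 i))) //.

Qed.

Lemma W3_M2 (R : realFieldType) n (I1 O1 I2 O2 I3 O3 : 'I_n -> finType)
  (X1 X2 X3 Z1 Z2 Z3 : finType)
  (T1 : X1 -> wtree I1 O1 Z1) (T2 : X2 -> wtree I2 O2 Z2) (T3 : X3 -> wtree I3 O3 Z3)
  d1 d2 d3 (Q : forall i, O1 i -> O2 i -> O3 i -> I1 i -> I2 i -> I3 i -> R)
  (hQ : forall i a c y z z' w, \sum_o Q i a o c y z w = \sum_o Q i a o c y z' w)
  a1 a3 x1 x2 x3 :
  \sum_a2 W3 T1 T2 T3 d1 d2 d3 Q a1 a2 a3 x1 x2 x3 =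
  \sum_(r1 : {dffun forall i, O1 i}) \sum_(r3 : {dffun forall i, O3 i})
   ((wout (T1 x1) r1 == a1)%:R * ((wout (T3 x3) r3 == a3)%:R *
     \prod_i \sum_o Q i (r1 i) o (r3 i) (winputs (T1 x1) r1 d1 i)
          (d2 i) (winputs (T3 x3) r3 d3 i))).
Proof.
rewrite /W3 (sum_ind3_2 (fun r2 : {dffun forall i, O2 i} => wout (T2 x2) r2)
  (fun r1 : {dffun forall i, O1 i} => (wout (T1 x1) r1 == a1)%:R) (fun r3 : {dffun forall i, O3 i} => (wout (T3 x3) r3 == a3)%:R)).
apply: eq_bigr => r1 _; apply: eq_bigr => r3 _.
rewrite (key (T2 x2) d2 (F := fun i o z => Q i (r1 i) o (r3 i) (winputs (T1 x1) r1 d1 i) z (winputs (T3 x3) r3 d3 i))) //.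

Qed.

Lemma W3_M3 (R : realFieldType) n (I1 O1 I2 O2 I3 O3 : 'I_n -> finType)
  (X1 X2 X3 Z1 Z2 Z3 : finType)
  (T1 : X1 -> wtree I1 O1 Z1) (T2 : X2 -> wtree I2 O2 Z2) (T3 : X3 -> wtree I3 O3 Z3)
  d1 d2 d3 (Q : forall i, O1 i -> O2 i -> O3 i -> I1 i -> I2 i -> I3 i -> R)
  (hQ : forall i a b y z w w', \sum_o Q i a b o y z w = \sum_o Q i a b o y z w')
  a1 a2 x1 x2 x3 :
  \sum_a3 W3 T1 T2 T3 d1 d2 d3 Q a1 a2 a3 x1 x2 x3 =
  \sum_(r1 : {dffun forall i, O1 i}) \sum_(r2 : {dffun forall i, O2 i})
   ((wout (T1 x1) r1 == a1)%:R * ((wout (T2 x2) r2 == a2)%:R *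
     \prod_i \sum_o Q i (r1 i) (r2 i) o (winputs (T1 x1) r1 d1 i)
          (winputs (T2 x2) r2 d2 i) (d3 i))).
Proof.
rewrite /W3 (sum_ind3_3 (fun r3 : {dffun forall i, O3 i} => wout (T3 x3) r3)
  (fun r1 : {dffun forall i, O1 i} => (wout (T1 x1) r1 == a1)%:R) (fun r2 : {dffun forall i, O2 i} => (wout (T2 x2) r2 == a2)%:R)).
apply: eq_bigr => r1 _; apply: eq_bigr => r2 _.
rewrite (key (T3 x3) d3 (F := fun i o w => Q i (r1 i) (r2 i) o (winputs (T1 x1) r1 d1 i) (winputs (T2 x2) r2 d2 i) w)) //.

Qed.

Lemma sum_ind2 (R : realFieldType) (T1 T2 U V : finType) (f1 : T1 -> U) (f2 : T2 -> V)
  (g : T1 -> T2 -> R) :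
  \sum_(u : U) \sum_(v : V) \sum_t1 \sum_t2 ((f1 t1 == u)%:R * ((f2 t2 == v)%:R * g t1 t2))
  = \sum_t1 \sum_t2 g t1 t2.
Proof.
transitivity (\sum_(u : U) \sum_t1 \sum_t2 ((f1 t1 == u)%:R * g t1 t2)).
  apply: eq_bigr => u _; rewrite exchange_big; apply: eq_bigr => t1 _.
  rewrite exchange_big; apply: eq_bigr => t2 _ /=.
  by rewrite -big_distrr /= sum_ind.
rewrite exchange_big; apply: eq_bigr => t1 _ /=.
under eq_bigr => u _ do rewrite -big_distrr /=.
by rewrite sum_ind.
Qed.

Lemma W3_norm (R : realFieldType) n (I1 O1 I2 O2 I3 O3 : 'I_n -> finType)
  (X1 X2 X3 Z1 Z2 Z3 : finType)
  (T1 : X1 -> wtree I1 O1 Z1) (T2 : X2 -> wtree I2 O2 Z2) (T3 : X3 -> wtree I3 O3 Z3)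
  d1 d2 d3 (Q : forall i, O1 i -> O2 i -> O3 i -> I1 i -> I2 i -> I3 i -> R)
  (hQ1 : forall i b c y y' z w, \sum_o Q i o b c y z w = \sum_o Q i o b c y' z w)
  (hQ2 : forall i a c y z z' w, \sum_o Q i a o c y z w = \sum_o Q i a o c y z' w)
  (hQ3 : forall i a b y z w w', \sum_o Q i a b o y z w = \sum_o Q i a b o y z w')
  (hQn : forall i y z w, \sum_o1 \sum_o2 \sum_o3 Q i o1 o2 o3 y z w = 1)
  x1 x2 x3 :
  \sum_a1 \sum_a2 \sum_a3 W3 T1 T2 T3 d1 d2 d3 Q a1 a2 a3 x1 x2 x3 = 1.
Proof.
under eq_bigr => a1 _ do under eq_bigr => a2 _ do rewrite (W3_M3 _ _ _ _ _ _ hQ3).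
rewrite (sum_ind2 (fun r1 : {dffun forall i, O1 i} => wout (T1 x1) r1)
   (fun r2 : {dffun forall i, O2 i} => wout (T2 x2) r2)).
transitivity (\sum_(r1 : {dffun forall i, O1 i}) \prod_i \sum_o2 \sum_o3
   Q i (r1 i) o2 o3 (winputs (T1 x1) r1 d1 i) (d2 i) (d3 i)).
  apply: eq_bigr => r1 _.
  rewrite (key (T2 x2) d2 (F := fun i o z => \sum_o3 Q i (r1 i) o o3 (winputs (T1 x1) r1 d1 i) z (d3 i))) //.
  move=> i z z'; rewrite exchange_big [RHS]exchange_big; apply: eq_bigr => o3 _.
  exact: hQ2.
rewrite (key (T1 x1) d1 (F := fun i o y => \sum_o2 \sum_o3 Q i o o2 o3 y (d2 i) (d3 i))).
  by apply: big1 => i _; apply: hQn.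
move=> i y y'; rewrite exchange_big [RHS]exchange_big; apply: eq_bigr => o2 _.
rewrite exchange_big [RHS]exchange_big; apply: eq_bigr => o3 _.
exact: hQ1.
Qed.

Lemma W3_sym12 (R : realFieldType) n (I1 O1 I3 O3 : 'I_n -> finType)
  (X1 X3 Z1 Z3 : finType)
  (T1 : X1 -> wtree I1 O1 Z1) (T3 : X3 -> wtree I3 O3 Z3)
  d1 d3 (Q : forall i, O1 i -> O1 i -> O3 i -> I1 i -> I1 i -> I3 i -> R)
  (hQ : forall i a b c y z w, Q i a b c y z w = Q i b a c z y w)
  a1 a2 a3 x1 x2 x3 :
  W3 T1 T1 T3 d1 d1 d3 Q a1 a2 a3 x1 x2 x3 = W3 T1 T1 T3 d1 d1 d3 Q a2 a1 a3 x2 x1 x3.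
Proof.
rewrite /W3 exchange_big; apply: eq_bigr => r2 _; apply: eq_bigr => r1 _.
apply: eq_bigr => r3 _; rewrite mulrCA; congr (_ * (_ * (_ * _))).
by apply: eq_bigr => i _; apply: hQ.
Qed.

Lemma W3_sym23 (R : realFieldType) n (I1 O1 I3 O3 : 'I_n -> finType)
  (X1 X3 Z1 Z3 : finType)
  (T1 : X1 -> wtree I1 O1 Z1) (T3 : X3 -> wtree I3 O3 Z3)
  d1 d3 (Q : forall i, O1 i -> O3 i -> O3 i -> I1 i -> I3 i -> I3 i -> R)
  (hQ : forall i a b c y z w, Q i a b c y z w = Q i a c b y w z)
  a1 a2 a3 x1 x2 x3 :
  W3 T1 T3 T3 d1 d3 d3 Q a1 a2 a3 x1 x2 x3 = W3 T1 T3 T3 d1 d3 d3 Q a1 a3 a2 x1 x3 x2.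
Proof.
rewrite /W3; apply: eq_bigr => r1 _; rewrite exchange_big; apply: eq_bigr => r3 _.
apply: eq_bigr => r2 _; congr (_ * _); rewrite mulrCA; congr (_ * (_ * _)).
by apply: eq_bigr => i _; apply: hQ.
Qed.

Lemma W3_ge0 (R : realFieldType) n (I1 O1 I2 O2 I3 O3 : 'I_n -> finType)
  (X1 X2 X3 Z1 Z2 Z3 : finType)
  (T1 : X1 -> wtree I1 O1 Z1) (T2 : X2 -> wtree I2 O2 Z2) (T3 : X3 -> wtree I3 O3 Z3)
  d1 d2 d3 (Q : forall i, O1 i -> O2 i -> O3 i -> I1 i -> I2 i -> I3 i -> R)
  (hQ : forall i a b c y z w, 0 <= Q i a b c y z w)
  a1 a2 a3 x1 x2 x3 : 0 <= W3 T1 T2 T3 d1 d2 d3 Q a1 a2 a3 x1 x2 x3.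
Proof.
apply: sumr_ge0 => r1 _; apply: sumr_ge0 => r2 _; apply: sumr_ge0 => r3 _.
by rewrite !mulr_ge0 ?ler0n // prodr_ge0.
Qed.

Lemma W3_ok (R : realFieldType) n (I1 O1 I2 O2 I3 O3 : 'I_n -> finType)
  (X1 X2 X3 Z1 Z2 Z3 : finType)
  (T1 : X1 -> wtree I1 O1 Z1) (T2 : X2 -> wtree I2 O2 Z2) (T3 : X3 -> wtree I3 O3 Z3)
  d1 d2 d3 (Q : forall i, O1 i -> O2 i -> O3 i -> I1 i -> I2 i -> I3 i -> R)
  (hQ : forall i, box3 (Q i) /\ nosig3 (Q i)) :
  box3 (W3 T1 T2 T3 d1 d2 d3 Q) /\ nosig3 (W3 T1 T2 T3 d1 d2 d3 Q).
Proof.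
have h1 i := (hQ i).2.1. have h2 i := (hQ i).2.2.1. have h3 i := (hQ i).2.2.2.
have hn i := (hQ i).1.2. have h0 i := (hQ i).1.1.
split; first split.
- by move=> *; apply: W3_ge0.
- by move=> *; apply: W3_norm.
split; last split.
- by move=> *; rewrite !(W3_M1 _ _ _ _ _ _ h1).
- by move=> *; rewrite !(W3_M2 _ _ _ _ _ _ h2).
- by move=> *; rewrite !(W3_M3 _ _ _ _ _ _ h3).
Qed.

From Stdlib Require Import ClassicalEpsilon.

Theorem theorem2 (R : realFieldType) (n : nat) (S : 'I_n -> scen)
  (P : forall i, sA (S i) -> sB (S i) -> sX (S i) -> sY (S i) -> R)
  (HP : forall i, GW (P i))
  (X' Y' A' B' : finType) (WA : wiringA S X' A') (WB : wiringB S Y' B')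
  (HWA : forall x', wvalid [::] (WA x'))
  (HWB : forall y', wvalid [::] (WB y')) :
  GW (wired P WA WB).
Proof.
pose cA i := constructive_indefinite_description _ (HP i).
pose PA i := proj1_sig (cA i).
pose cB i := constructive_indefinite_description _ (proj2_sig (cA i)).
pose PB i := proj1_sig (cB i).
have hAB i := proj2_sig (cB i).
pose dA j := sx0 (S j). pose dB j := sy0 (S j).
exists (W3 WA WA WB dA dA dB PA), (W3 WA WB WB dA dB dB PB).
have hPA i : [/\ box3 (PA i) /\ nosig3 (PA i), box3 (PB i) /\ nosig3 (PB i),
        (forall a a' b x x' y, PA i a a' b x x' y = PA i a' a b x' x y),
        (forall a b b' x y y', PB i a b b' x y y' = PB i a b' b x y' y) &
        (forall a b x y x' y',
           P i a b x y = \sum_a' PA i a a' b x x' y /\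
           P i a b x y = \sum_b' PB i a b b' x y y')] by exact: hAB.
split.
- by apply: W3_ok => i; case: (hPA i).
- by apply: W3_ok => i; case: (hPA i).
- by apply: W3_sym12 => i; case: (hPA i).
- by apply: W3_sym23 => i; case: (hPA i).
move=> a b x y x' y'; split.
- have hns i : nosig3 (PA i) by case: (hPA i) => [[]].
  rewrite (W3_M2 _ _ _ _ _ _ (fun i => (hns i).2.1)).
  rewrite /wired; apply: eq_bigr => r1 _; apply: eq_bigr => r3 _.
  rewrite [X in _ = _ * (_ * X)](eq_bigr (fun i => P i (r1 i) (r3 i) (winputs (WA x) r1 dA i) (winputs (WB y) r3 dB i))); last first.
    by move=> i _; case: (hPA i) => _ _ _ _ /(_ (r1 i) (r3 i) (winputs (WA x) r1 dA i) (winputs (WB y) r3 dB i) (dA i) (dB i)) [->].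
  by case: eqP => _; case: eqP => _ /=; rewrite ?mul1r ?mul0r.
- have hns i : nosig3 (PB i) by case: (hPA i) => _ [].
  rewrite (W3_M3 _ _ _ _ _ _ (fun i => (hns i).2.2)).
  rewrite /wired; apply: eq_bigr => r1 _; apply: eq_bigr => r3 _.
  rewrite [X in _ = _ * (_ * X)](eq_bigr (fun i => P i (r1 i) (r3 i) (winputs (WA x) r1 dA i) (winputs (WB y) r3 dB i))); last first.
    by move=> i _; case: (hPA i) => _ _ _ _ /(_ (r1 i) (r3 i) (winputs (WA x) r1 dA i) (winputs (WB y) r3 dB i) (dA i) (dB i)) [_ ->].
  by case: eqP => _; case: eqP => _ /=; rewrite ?mul1r ?mul0r.
Qed.
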